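(* Suppose that all state functions and controls are continuously differentiable on $I$. As long as $\epsilon(t)\neq 0$, $n^j(t)\neq 0$ and $V^j(t)\neq 0$ for all $j\in\{1,\dots,S\}$ and all $t\in I$, system (A) is equivalent to the ''basic system'' obtained from (A) by replacing the component mole balances (CM$_0$) by the original component mole balances (OCM) (for all $i=1,\dots,C$) and replacing the total mole balances (TM) by the vapor summation equations (YS). That is, a tuple of state functions satisfying these non-vanishing conditions on $I$ solves (A) if and only if it solves the basic system.
   Context: Fix integers $S\ge 2$ (stages) and $C\ge 2$ (components) and an interval $I\subset\mathbb R$. Given are continuously differentiable real functions $f_{\mathrm{vle},i}(P,T,\mathbf x)$ ($i=1,\dots,C$), $f_{\mathrm{hl}}(T,\mathbf x)$, $f_{\mathrm{hv}}(T,\mathbf y)$, $f_{\mathrm{holdup}}(L)$, with $P,T,L\in\mathbb R$, $\mathbf x,\mathbf y\in\mathbb R^C$. Controls are continuously differentiable real functions $\epsilon,P,Q,T^{\mathrm{cond}}$ on $I$. State variables are real functions on $I$: $n^j,H^j,T^j,V^j$ and vectors $\mathbf x^j=(x^j_1,\dots,x^j_C)$, $\mathbf y^j=(y^j_1,\dots,y^j_C)$ for $j=1,\dots,S$, and $L^j$ for $j=1,\dots,S-1$. A solution of a system is a tuple of continuously differentiable state functions satisfying all its equations at every $t\in I$; dots are time derivatives. Two systems are equivalent as long as a condition holds if their sets of solutions satisfying that condition on $I$ coincide. Below, ''$2\le j\le S-1$'' marks the middle-stage equations. (TM): $\dot n^1=L^1-V^1$; $\dot n^j=L^j-V^j-L^{j-1}+V^{j-1}$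 ($2\le j\le S-1$); $\dot n^S=-\epsilon V^S-L^{S-1}+V^{S-1}$. (CM$_0$), for $i=1,\dots,C$: $\dot x_i^1=\big(L^1(x_i^2-x_i^1)-V^1(y_i^1-x_i^1)\big)/n^1$; $\dot x_i^j=\big(L^j(x_i^{j+1}-x_i^j)-V^j(y_i^j-x_i^j)+V^{j-1}(y_i^{j-1}-x_i^j)\big)/n^j$ ($2\le j\le S-1$); $\dot x_i^S=\big(-\epsilon V^S(y_i^S-x_i^S)+V^{S-1}(y_i^{S-1}-x_i^S)\big)/n^S$. (EB): $\dot H^1=L^1f_{\mathrm{hl}}(T^2,\mathbf x^2)-V^1f_{\mathrm{hv}}(T^1,\mathbf y^1)+Q$; $\dot H^j=L^jf_{\mathrm{hl}}(T^{j+1},\mathbf x^{j+1})-V^jf_{\mathrm{hv}}(T^j,\mathbf y^j)-L^{j-1}f_{\mathrm{hl}}(T^j,\mathbf x^j)+V^{j-1}f_{\mathrm{hv}}(T^{j-1},\mathbf y^{j-1})$ ($2\le j\le S-1$); $\dot H^S=(1-\epsilon)V^Sf_{\mathrm{hl}}(T^{\mathrm{cond}},\mathbf y^S)-V^Sf_{\mathrm{hv}}(T^S,\mathbf y^S)-L^{S-1}f_{\mathrm{hl}}(T^S,\mathbf x^S)+V^{S-1}f_{\mathrm{hv}}(T^{S-1},\mathbf y^{S-1})$. (XS): $\sum_{i=1}^C x_i^j=1$, $j=1,\dots,S$. (YD): $y_i^j=f_{\mathrm{vle},i}(P,T^j,\mathbf x^j)$ for all $i,j$. (ED): $H^j=n^jf_{\mathrm{hl}}(T^j,\mathbf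 x^j)$, $j=1,\dots,S$. (HO): $n^j=f_{\mathrm{holdup}}(L^{j-1})$, $j=2,\dots,S$. System (A) consists of (TM), (CM$_0$), (EB), (XS), (YD), (ED), (HO). (YS): $\sum_{i=1}^C y_i^j=1$, $j=1,\dots,S$. (OCM), for $i=1,\dots,C$: $\frac{d}{dt}(n^1x_i^1)=L^1x_i^2-V^1y_i^1$; $\frac{d}{dt}(n^jx_i^j)=L^jx_i^{j+1}-V^jy_i^j-L^{j-1}x_i^j+V^{j-1}y_i^{j-1}$ ($2\le j\le S-1$); $\frac{d}{dt}(n^Sx_i^S)=-\epsilon V^Sy_i^S-L^{S-1}x_i^S+V^{S-1}y_i^{S-1}$. *)

(* Defs.v *)
From HB Require Import structures.
From mathcomp Require Import all_boot all_order all_algebra.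
From mathcomp Require Import reals.
Set Implicit Arguments. Unset Strict Implicit. Unset Printing Implicit Defensive.
Import Order.TTheory GRing.Theory Num.Theory.
Local Open Scope ring_scope.

Section Calculus.
Variable R : realType.

Definition is_interval (I : R -> Prop) : Prop :=
  forall a b c, I a -> I c -> a <= b -> b <= c -> I b.

(* I contains at least two points (so derivatives on I are unique). *)
Definition nondeg_interval (I : R -> Prop) : Prop :=
  exists a b, [/\ I a, I b & a < b].

Definition has_deriv_on (I : R -> Prop) (f f' : R -> R) : Prop :=
  forall t, I t -> forall e : R, 0 < e -> exists2 d : R, 0 < d &
    forall s, I s -> s != t -> `|s - t| < d ->
      `|(f s - f t) / (s - t) - f' t| < e.

Definition cont_on (I : R -> Prop) (g : R -> R) : Prop :=
  forall t, I t -> forall e : R, 0 < e -> exists2 d : R, 0 < d &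
    forall s, I s -> `|s - t| < d -> `|g s - g t| < e.

Definition C1_on (I : R -> Prop) (f : R -> R) : Prop :=
  exists f', has_deriv_on I f f' /\ cont_on I f'.

Definition upd m (z : 'I_m -> R) (k : 'I_m) (h : R) : 'I_m -> R :=
  fun i => if i == k then z i + h else z i.

Definition contRm m (g : ('I_m -> R) -> R) : Prop :=
  forall z (e : R), 0 < e -> exists2 d : R, 0 < d &
    forall w, (forall i, `|w i - z i| < d) -> `|g w - g z| < e.

Definition C1Rm m (g : ('I_m -> R) -> R) : Prop :=
  exists dg : 'I_m -> ('I_m -> R) -> R,
    (forall k z (e : R), 0 < e -> exists2 d : R, 0 < d &
       forall h : R, h != 0 -> `|h| < d ->
         `|(g (upd z k h) - g z) / h - dg k z| < e)
    /\ (forall k, contRm (dg k)).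

(* packing (P, T, x) in R^(2+C) and (T, x) in R^(1+C) *)
Definition pack2 C (f : R -> R -> ('I_C -> R) -> R) : ('I_(2 + C) -> R) -> R :=
  fun z => f (z (lshift C (@ord0 1))) (z (lshift C (@ord_max 1)))
             (fun k => z (rshift 2 k)).
Definition pack1 C (f : R -> ('I_C -> R) -> R) : ('I_(1 + C) -> R) -> R :=
  fun z => f (z (lshift C (@ord0 0))) (fun k => z (rshift 1 k)).

End Calculus.

(* Stages are indexed by nat j with 1 <= j <= S (values
   at other indices are irrelevant); components by i : 'I_C.
   State:  n H T V : nat -> R -> R,  x y : nat -> 'I_C -> R -> R,
           L : nat -> R -> R (used for 1 <= j <= S-1).
   Controls: eps P Q Tc : R -> R. *)
Section Column.
Variable R : realType.
Variables (S C : nat) (I : R -> Prop).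
Variable fvle : 'I_C -> R -> R -> ('I_C -> R) -> R.
Variables (fhl fhv : R -> ('I_C -> R) -> R) (fholdup : R -> R).
Variables (eps P Q Tc : R -> R).
Variables (n H T V L : nat -> R -> R) (x y : nat -> 'I_C -> R -> R).

Definition xv j t : 'I_C -> R := fun i => x j i t.
Definition yv j t : 'I_C -> R := fun i => y j i t.

Definition TM : Prop :=
  [/\ has_deriv_on I (n 1%N) (fun t => L 1%N t - V 1%N t),
      (forall j, (2 <= j <= S.-1)%N ->
        has_deriv_on I (n j)
          (fun t => L j t - V j t - L j.-1 t + V j.-1 t))
    & has_deriv_on I (n S)
          (fun t => - eps t * V S t - L S.-1 t + V S.-1 t)].

Definition CM0 : Prop := forall i : 'I_C,
  [/\ has_deriv_on I (x 1%N i)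
        (fun t => (L 1%N t * (x 2%N i t - x 1%N i t)
                   - V 1%N t * (y 1%N i t - x 1%N i t)) / n 1%N t),
      (forall j, (2 <= j <= S.-1)%N ->
        has_deriv_on I (x j i)
          (fun t => (L j t * (x j.+1 i t - x j i t)
                     - V j t * (y j i t - x j i t)
                     + V j.-1 t * (y j.-1 i t - x j i t)) / n j t))
    & has_deriv_on I (x S i)
        (fun t => (- eps t * V S t * (y S i t - x S i t)
                   + V S.-1 t * (y S.-1 i t - x S i t)) / n S t)].

Definition EB : Prop :=
  [/\ has_deriv_on I (H 1%N)
        (fun t => L 1%N t * fhl (T 2%N t) (xv 2 t)
                  - V 1%N t * fhv (T 1%N t) (yv 1 t) + Q t),
      (forall j, (2 <= j <= S.-1)%N ->
        has_deriv_on I (H j)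
          (fun t => L j t * fhl (T j.+1 t) (xv j.+1 t)
                    - V j t * fhv (T j t) (yv j t)
                    - L j.-1 t * fhl (T j t) (xv j t)
                    + V j.-1 t * fhv (T j.-1 t) (yv j.-1 t)))
    & has_deriv_on I (H S)
        (fun t => (1 - eps t) * V S t * fhl (Tc t) (yv S t)
                  - V S t * fhv (T S t) (yv S t)
                  - L S.-1 t * fhl (T S t) (xv S t)
                  + V S.-1 t * fhv (T S.-1 t) (yv S.-1 t))].

Definition XS : Prop :=
  forall j, (1 <= j <= S)%N -> forall t, I t -> \sum_(i < C) x j i t = 1.

Definition YD : Prop :=
  forall j, (1 <= j <= S)%N -> forall (i : 'I_C) t, I t ->
    y j i t = fvle i (P t) (T j t) (xv j t).

Definition ED : Prop :=
  forall j, (1 <= j <= S)%N -> forall t, I t ->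
    H j t = n j t * fhl (T j t) (xv j t).

Definition HO : Prop :=
  forall j, (2 <= j <= S)%N -> forall t, I t ->
    n j t = fholdup (L j.-1 t).

Definition YS : Prop :=
  forall j, (1 <= j <= S)%N -> forall t, I t -> \sum_(i < C) y j i t = 1.

Definition OCM : Prop := forall i : 'I_C,
  [/\ has_deriv_on I (fun t => n 1%N t * x 1%N i t)
        (fun t => L 1%N t * x 2%N i t - V 1%N t * y 1%N i t),
      (forall j, (2 <= j <= S.-1)%N ->
        has_deriv_on I (fun t => n j t * x j i t)
          (fun t => L j t * x j.+1 i t - V j t * y j i t
                    - L j.-1 t * x j i t + V j.-1 t * y j.-1 i t))
    & has_deriv_on I (fun t => n S t * x S i t)
        (fun t => - eps t * V S t * y S i t - L S.-1 t * x S i t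
                  + V S.-1 t * y S.-1 i t)].

Definition systemA : Prop := TM /\ CM0 /\ EB /\ XS /\ YD /\ ED /\ HO.

Definition basic_system : Prop := YS /\ OCM /\ EB /\ XS /\ YD /\ ED /\ HO.

Definition states_C1 : Prop :=
  [/\ forall j, (1 <= j <= S)%N ->
        [/\ C1_on I (n j), C1_on I (H j), C1_on I (T j), C1_on I (V j)
          & forall i, C1_on I (x j i) /\ C1_on I (y j i)]
    & forall j, (1 <= j <= S.-1)%N -> C1_on I (L j)].

Definition nonvanishing : Prop :=
  forall t, I t -> eps t != 0 /\
    forall j, (1 <= j <= S)%N -> n j t != 0 /\ V j t != 0.

End Column.

(* Main.v *)
Require Import Defs.
From HB Require Import structures.
From mathcomp Require Import all_boot all_order all_algebra.
From mathcomp Require Import reals.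
From HB Require Import structures.
From mathcomp Require Import all_boot all_order all_algebra.
From mathcomp Require Import all_classical all_reals all_analysis.
From mathcomp Require Import ring lra zify.
Import Order.TTheory GRing.Theory Num.Theory.
Import numFieldNormedType.Exports.
Require Import Defs.
Local Open Scope ring_scope.
Set Implicit Arguments. Unset Strict Implicit.

Section Aux.
Variable R : realType.
Variable I : R -> Prop.

Definition hd (f f' : R -> R) t := forall e : R, 0 < e -> exists2 d : R, 0 < d &
    forall s, I s -> s != t -> `|s - t| < d ->
      `|(f s - f t) / (s - t) - f' t| < e.

Local Notation FF t := (within (fun s => I s /\ s != t) (nbhs t)).

Lemma hd_cvg f f' t : hd f f' t <-> ((fun s => (f s - f t) / (s - t)) @ FF t --> f' t)%classic.
Proof.
split.
- move=> h; apply/cvgrPdist_lt => e e0.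
  have [d d0 hd'] := h e e0.
  rewrite near_withinE; apply/nbhs_normP; exists d => //= s hs [Is nst].
  rewrite distrC; apply: hd' => //; by rewrite distrC.
- move=> /cvgrPdist_lt h e e0; have := h e e0.
  rewrite near_withinE => /nbhs_normP [d d0 hd'].
  exists d => // s Is nst hs; rewrite distrC; apply: hd' => //=; by rewrite distrC.
Qed.

Lemma hd_mul f f' g g' t : hd f f' t -> hd g g' t ->
  hd (fun s => f s * g s) (fun s => f' s * g s + f s * g' s) t.
Proof.
rewrite !hd_cvg => hf hg.
have hgs : (g s @[s --> FF t] --> g t)%classic.
  have eqg : (fun s => g t + (g s - g t) / (s - t) * (s - t)) = g.
    apply/funext => s; have [->|nst] := eqVneq s t.
      by rewrite !subrr mulr0 addr0.
    by field; rewrite subr_eq0.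
  rewrite -[X in (X s @[s --> _] --> _)%classic]eqg.
  have := @cvgD _ _ _ (FF t) _ (fun=> g t) (fun s => (g s - g t) / (s - t) * (s - t)) (g t) (g' t * 0).
  rewrite mulr0 addr0; apply; first exact: cvg_cst.
  have hid : ((fun s => s - t) @ FF t --> 0)%classic.
    rewrite -(subrr t); apply: cvgB; last exact: cvg_cst.
    exact: cvg_within.
  have h := cvgM hg hid; rewrite mulr0 in h; exact: h.
have -> : (fun s => (f s * g s - f t * g t) / (s - t)) =
   (fun s => (f s - f t) / (s - t) * g s + f t * ((g s - g t) / (s - t))).
  apply/funext => s; rewrite /=; ring.
apply: cvgD; first exact: cvgM.
apply: cvgM => //; exact: cvg_cst.
Qed.

Lemma hd_add f f' g g' t : hd f f' t -> hd g g' t ->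
  hd (fun s => f s + g s) (fun s => f' s + g' s) t.
Proof.
rewrite !hd_cvg => hf hg.
have -> : (fun s => (f s + g s - (f t + g t)) / (s - t)) =
   (fun s => (f s - f t) / (s - t) + ((g s - g t) / (s - t))).
  apply/funext => s; rewrite /=; ring.
exact: cvgD.
Qed.

Lemma hd_cst c t : hd (fun=> c) (fun=> 0) t.
Proof. by move=> e e0; exists 1 => // s _ _ _; rewrite subrr mul0r subr0 normr0. Qed.

Lemma deriv_ext f f2 g g2 : has_deriv_on I f g ->
  (forall t, I t -> f t = f2 t) -> (forall t, I t -> g t = g2 t) ->
  has_deriv_on I f2 g2.
Proof.
move=> h ef eg t It e e0; have [d d0 hd'] := h t It e e0.
exists d => // s Is nst hs; rewrite -!ef // -eg //; exact: hd'.
Qed.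

Lemma deriv_mul f f' g g' : has_deriv_on I f f' -> has_deriv_on I g g' ->
  has_deriv_on I (fun s => f s * g s) (fun s => f' s * g s + f s * g' s).
Proof. move=> hf hg t It; exact: hd_mul (hf t It) (hg t It). Qed.

Lemma deriv_sum (J : Type) (r : seq J) (F F' : J -> R -> R) :
  (forall j, has_deriv_on I (F j) (F' j)) ->
  has_deriv_on I (fun s => \sum_(j <- r) F j s) (fun s => \sum_(j <- r) F' j s).
Proof.
move=> h t It.
have hx : forall f f2 g g2, hd f g t -> f =1 f2 -> g =1 g2 -> hd f2 g2 t.
  by move=> f1 f2 g1 g2 hh ef eg; rewrite -(funext ef) -(funext eg).
change (hd (fun s => \sum_(j <- r) F j s) (fun s => \sum_(j <- r) F' j s) t).
elim: r => [|a r IH].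
  by apply: (hx _ _ _ _ (hd_cst 0 t)) => s; rewrite big_nil.
apply: (hx _ _ _ _ (hd_add (h a t It) IH)) => s; by rewrite big_cons.
Qed.

Lemma deriv_cst c : has_deriv_on I (fun=> c) (fun=> 0).
Proof. move=> t _; exact: hd_cst. Qed.

Lemma near_pt : nondeg_interval I -> is_interval I -> forall t d : R, I t -> 0 < d ->
  exists s, [/\ I s, s != t & `|s - t| < d].
Proof.
move=> [a [b [Ia Ib ab]]] hI0 t d It d0.
have hI : forall a b c : R, I a -> I c -> a <= b -> b <= c -> I b := hI0.
have [tb|bt] := ltP t b.
  have [db|bd] := leP d (b - t).
    exists (t + d / 2); split.
    - apply: (hI t _ b) => //; lra.
    - apply/eqP => h; lra.
    - rewrite (_ : t + d / 2 - t = d / 2); last by ring.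
      rewrite ger0_norm; lra.
  exists (t + (b - t) / 2); split.
  - apply: (hI t _ b) => //; lra.
  - apply/eqP => h; lra.
  - rewrite (_ : t + (b - t) / 2 - t = (b - t) / 2); last by ring.
    rewrite ger0_norm; lra.
have [da|ad] := leP d (t - a).
  exists (t - d / 2); split.
  - apply: (hI a _ t) => //; lra.
  - apply/eqP => h; lra.
  - rewrite (_ : t - d / 2 - t = - (d / 2)); last by ring.
    rewrite normrN ger0_norm; lra.
exists (t - (t - a) / 2); split.
- apply: (hI a _ t) => //; lra.
- apply/eqP => h; lra.
- rewrite (_ : t - (t - a) / 2 - t = - ((t - a) / 2)); last by ring.
  rewrite normrN ger0_norm; lra.
Qed.

Lemma deriv_unique f g1 g2 : nondeg_interval I -> is_interval I ->
  has_deriv_on I f g1 -> has_deriv_on I f g2 -> forall t, I t -> g1 t = g2 t.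
Proof.
move=> hI2 hI h1 h2 t It.
apply/eqP; apply/negPn/negP => ne.
have e0 : 0 < `|g1 t - g2 t| / 2 by rewrite divr_gt0 // normr_gt0 subr_eq0.
have [d1 d10 hd1] := h1 t It _ e0.
have [d2 d20 hd2] := h2 t It _ e0.
have dm : 0 < Num.min d1 d2 by rewrite lt_min d10 d20.
have [s [Is nst hs]] := near_pt hI2 hI It dm.
move: hs; rewrite lt_min => /andP [hs1 hs2].
have k1 := hd1 s Is nst hs1.
have k2 := hd2 s Is nst hs2.
set q := (f s - f t) / (s - t) in k1 k2.
have : `|g1 t - g2 t| <= `|q - g2 t| + `|q - g1 t|.
  rewrite (_ : g1 t - g2 t = (q - g2 t) - (q - g1 t)); last by ring.
  exact: ler_normB.
lra.
Qed.
End Aux.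

Lemma sum4 (R : realType) (C : nat) (a b c d : R) (u v w z : 'I_C -> R) :
  \sum_(i < C) (a * u i + b * v i + c * w i + d * z i) =
  a * \sum_(i < C) u i + b * \sum_(i < C) v i + c * \sum_(i < C) w i + d * \sum_(i < C) z i.
Proof. by rewrite !big_split /= -!mulr_sumr. Qed.

Definition p31 (A B C : Prop) (h : [/\ A, B & C]) : A := let: And3 a _ _ := h in a.
Definition p32 (A B C : Prop) (h : [/\ A, B & C]) : B := let: And3 _ a _ := h in a.
Definition p33 (A B C : Prop) (h : [/\ A, B & C]) : C := let: And3 _ _ a := h in a.

Lemma solve_x (R : realType) (a b c d e : R) : b != 0 -> a * c + b * d = e -> d = (e - a * c) / b.
Proof. by move=> bz <-; field. Qed.

Lemma cancelY (R : realType) (a b Y : R) : a != 0 -> b != 0 -> a / b * (1 - Y) = 0 -> Y = 1.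
Proof.
move=> az bz /eqP; rewrite !mulf_eq0 invr_eq0 (negbTE az) (negbTE bz) /= subr_eq0.
by move/eqP.
Qed.

Theorem mainTheorem1 (R : realType) (S C : nat) (hS : (2 <= S)%N) (hC : (2 <= C)%N)
  (I : R -> Prop) (hI : is_interval I) (hI2 : nondeg_interval I)
  (fvle : 'I_C -> R -> R -> ('I_C -> R) -> R)
  (fhl fhv : R -> ('I_C -> R) -> R) (fholdup : R -> R)
  (hfvle : forall i, C1Rm (pack2 (fvle i)))
  (hfhl : C1Rm (pack1 fhl)) (hfhv : C1Rm (pack1 fhv))
  (hfholdup : C1_on (fun _ => True) fholdup)
  (eps P Q Tc : R -> R)
  (hctrl : [/\ C1_on I eps, C1_on I P, C1_on I Q & C1_on I Tc])
  (n H T V L : nat -> R -> R) (x y : nat -> 'I_C -> R -> R)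
  (hstates : states_C1 S I n H T V L x y)
  (hnz : nonvanishing S I eps n V) :
  systemA S I fvle fhl fhv fholdup eps P Q Tc n H T V L x y <->
  basic_system S I fvle fhl fhv fholdup eps P Q Tc n H T V L x y.
Proof.
have Dext := @deriv_ext R I.
have Dmul := @deriv_mul R I.
have Dsum := fun F F' => @deriv_sum R I _ (index_enum 'I_C) F F'.
have DU : forall f g1 g2, has_deriv_on I f g1 -> has_deriv_on I f g2 ->
    forall t, I t -> g1 t = g2 t.
  by move=> f g1 g2; exact: deriv_unique.
have ez : forall t, I t -> eps t != 0 by move=> t It; case: (hnz t It).
have nz : forall j t, (1 <= j <= S)%N -> I t -> n j t != 0.
  by move=> j t hj It; case: (hnz t It) => _ /(_ j hj) [].
have vz : forall j t, (1 <= j <= S)%N -> I t -> V j t != 0.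
  by move=> j t hj It; case: (hnz t It) => _ /(_ j hj) [].
have j1 : (1 <= 1 <= S)%N by lia.
have j2 : (1 <= 2 <= S)%N by lia.
have jS : (1 <= S <= S)%N by lia.
have jS1 : (1 <= S.-1 <= S)%N by lia.
split.
- move=> [hTM [hCM [hEB [hXS [hYD [hED hHO]]]]]].
  have sumx0 : forall j, (1 <= j <= S)%N -> forall G : 'I_C -> R -> R,
      (forall i, has_deriv_on I (x j i) (G i)) -> forall t, I t -> \sum_(i < C) G i t = 0.
    move=> j hj G hG t It.
    have h1 := Dsum (fun i => x j i) G hG.
    have h2 : has_deriv_on I (fun s => \sum_(i < C) x j i s) (fun _ => 0).
      apply: (Dext _ _ _ _ (@deriv_cst R I 1)) => s Is //.
      by rewrite hXS.
    exact: (DU _ _ _ h1 h2).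
  have Y1 : forall t, I t -> \sum_(i < C) y 1%N i t = 1.
    move=> t It.
    have := sumx0 1%N j1 _ (fun i => p31 (hCM i)) t It.
    rewrite (eq_bigr (fun i => (L 1%N t / n 1%N t) * x 2%N i t
       + ((V 1%N t - L 1%N t) / n 1%N t) * x 1%N i t
       + (- V 1%N t / n 1%N t) * y 1%N i t + 0 * x 1%N i t)); last by move=> i _; ring.
    rewrite sum4 (hXS 2%N j2 t It) (hXS 1%N j1 t It) => E.
    apply: (cancelY (vz 1%N t j1 It) (nz 1%N t j1 It)); rewrite -[X in _ = X]E; ring.
  have Ymid : forall k, (1 <= k <= S.-1)%N -> forall t, I t -> \sum_(i < C) y k i t = 1.
    elim=> [//|k IH] hk t It.
    case: k IH hk => [_ _|k IH hk]; first exact: Y1.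
    have hk2 : (2 <= k.+2 <= S.-1)%N by lia.
    have hk2' : (1 <= k.+2 <= S)%N by lia.
    have hk3 : (1 <= k.+3 <= S)%N by lia.
    have hk1 : (1 <= k.+1 <= S.-1)%N by lia.
    have := sumx0 k.+2 hk2' _ (fun i => p32 (hCM i) k.+2 hk2) t It.
    rewrite (eq_bigr (fun i => (L k.+2 t / n k.+2 t) * x k.+3 i t
       + ((V k.+2 t - L k.+2 t - V k.+1 t) / n k.+2 t) * x k.+2 i t
       + (- V k.+2 t / n k.+2 t) * y k.+2 i t + (V k.+1 t / n k.+2 t) * y k.+1 i t));
      last by move=> i _ /=; ring.
    rewrite sum4 (hXS k.+3 hk3 t It) (hXS k.+2 hk2' t It) (IH hk1 t It) => E.
    apply: (cancelY (vz k.+2 t hk2' It) (nz k.+2 t hk2' It)); rewrite -[X in _ = X]E; ring.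
  have YS_S : forall t, I t -> \sum_(i < C) y S i t = 1.
    move=> t It.
    have := sumx0 S jS _ (fun i => p33 (hCM i)) t It.
    rewrite (eq_bigr (fun i => (- eps t * V S t / n S t) * y S i t
       + ((eps t * V S t - V S.-1 t) / n S t) * x S i t
       + (V S.-1 t / n S t) * y S.-1 i t + 0 * x S i t)); last by move=> i _; ring.
    have hS1 : (1 <= S.-1 <= S.-1)%N by lia.
    rewrite sum4 (hXS S jS t It) (Ymid S.-1 hS1 t It) => E.
    apply: (cancelY (mulf_neq0 (ez t It) (vz S t jS It)) (nz S t jS It)); rewrite -[X in _ = X]E; ring.
  refine (conj _ (conj _ (conj hEB (conj hXS (conj hYD (conj hED hHO)))))).
  + move=> j hj t It.
    have [hjS|hjS] := leqP j S.-1.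
      apply: Ymid => //; lia.
    have -> : j = S by lia.
    exact: YS_S.
  + move=> i; case: (hCM i) => c1 cm cS; case: hTM => t1 tm tS; split.
    * apply: (Dext _ _ _ _ (Dmul _ _ _ _ t1 c1)) => s Is //=.
      by field; exact: nz.
    * move=> j hj; apply: (Dext _ _ _ _ (Dmul _ _ _ _ (tm j hj) (cm j hj))) => s Is //=.
      by field; apply: nz => //; lia.
    * apply: (Dext _ _ _ _ (Dmul _ _ _ _ tS cS)) => s Is //=.
      by field; exact: nz.
- move=> [hYS [hOCM [hEB [hXS [hYD [hED hHO]]]]]].
  have hTM : TM S I eps n V L.
    split.
    + apply: (Dext _ _ _ _ (Dsum _ _ (fun i => p31 (hOCM i))))
        => s Is /=.
        by rewrite -mulr_sumr hXS // mulr1.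
      rewrite (eq_bigr (fun i => L 1%N s * x 2%N i s + (- V 1%N s) * y 1%N i s
          + 0 * x 1%N i s + 0 * x 1%N i s)); last by move=> i _; ring.
      by rewrite sum4 hXS // hYS // hXS //; ring.
    + move=> j hj.
      have hj0 : (1 <= j <= S)%N by lia.
      have hj1 : (1 <= j.+1 <= S)%N by lia.
      have hjm : (1 <= j.-1 <= S)%N by lia.
      apply: (Dext _ _ _ _ (Dsum _ _ (fun i => p32 (hOCM i) j hj)))
        => s Is /=.
        by rewrite -mulr_sumr hXS // mulr1.
      rewrite (eq_bigr (fun i => L j s * x j.+1 i s + (- V j s) * y j i s
          + (- L j.-1 s) * x j i s + V j.-1 s * y j.-1 i s)); last by move=> i _; ring.
      by rewrite sum4 (hXS j.+1) // (hYS j) // (hXS j) // (hYS j.-1) //; ring.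
    + apply: (Dext _ _ _ _ (Dsum _ _ (fun i => p33 (hOCM i))))
        => s Is /=.
        by rewrite -mulr_sumr hXS // mulr1.
      rewrite (eq_bigr (fun i => (- eps s * V S s) * y S i s + (- L S.-1 s) * x S i s
          + V S.-1 s * y S.-1 i s + 0 * x S i s)); last by move=> i _; ring.
      by rewrite sum4 (hYS S) // (hXS S) // (hYS S.-1) //; ring.
  refine (conj hTM (conj _ (conj hEB (conj hXS (conj hYD (conj hED hHO)))))).
  case: hstates => hst _.
  move=> i; case: (hOCM i) => o1 om oS; case: hTM => t1 tm tS; split.
  + have [_ _ _ _ /(_ i) [[x' [hx' _]] _]] := hst 1%N j1.
    have E := DU _ _ _ (Dmul _ _ _ _ t1 hx') o1.
    apply: (Dext _ _ _ _ hx') => s Is //=.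
    have Es := E s Is; rewrite /= in Es.
    rewrite (solve_x (nz 1%N s j1 Is) Es); field; exact: nz.
  + move=> j hj.
    have hj0 : (1 <= j <= S)%N by lia.
    have [_ _ _ _ /(_ i) [[x' [hx' _]] _]] := hst j hj0.
    have E := DU _ _ _ (Dmul _ _ _ _ (tm j hj) hx') (om j hj).
    apply: (Dext _ _ _ _ hx') => s Is //=.
    have Es := E s Is; rewrite /= in Es.
    rewrite (solve_x (nz j s hj0 Is) Es); field; exact: nz.
  + have [_ _ _ _ /(_ i) [[x' [hx' _]] _]] := hst S jS.
    have E := DU _ _ _ (Dmul _ _ _ _ tS hx') oS.
    apply: (Dext _ _ _ _ hx') => s Is //=.
    have Es := E s Is; rewrite /= in Es.
    rewrite (solve_x (nz S s jS Is) Es); field; exact: nz.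
Qed.
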